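(* Let $n\ge2$, $\omega\in\mathbb{R}^n$, $k\in\mathbb{R}_{>0}^n$ satisfy (IC1) $\sum_\mu\omega_\mu=0$, (IC2) $\omega\ne0$, (IC3) $\left|\frac{\omega_1}{k_1}\right|\le\cdots\le\left|\frac{\omega_n}{k_n}\right|$. Let $\sigma\in\{-1,+1\}^n$, $\sigma_+=\{\mu:\sigma_\mu=+1\}$, and $f_\sigma(R)=-R+\frac1n\sum_{\mu=1}^n\sigma_\mu\sqrt{k_\mu^2R-\omega_\mu^2}$. Then every positive root of $f_\sigma$ lies in the interval $$\left[\left(\frac{\omega_n}{k_n}\right)^2,\ \left(\frac1n\sum_{\mu\in\sigma_+}k_\mu\right)^2\right].$$
   Context: Square roots are nonnegative real square roots; a positive root of $f_\sigma$ is a real $R>0$ with $k_\mu^2R-\omega_\mu^2\ge0$ for all $\mu$ and $f_\sigma(R)=0$. *)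

(* Defs.v *)
From mathcomp Require Import all_boot all_order all_algebra.
Set Implicit Arguments. Unset Strict Implicit. Unset Printing Implicit Defensive.
Import Order.TTheory GRing.Theory Num.Theory.
Local Open Scope ring_scope.

(* sigma : 'I_n -> bool encodes sigma_mu = +1 (true) or -1 (false). *)
Definition sgn (R : numDomainType) (b : bool) : R := if b then 1 else -1.

Definition f_sigma (R : rcfType) (n : nat) (omega k : 'I_n -> R)
  (sigma : 'I_n -> bool) (x : R) : R :=
  - x + n%:R^-1 * \sum_(mu < n) sgn R (sigma mu) * Num.sqrt (k mu ^+ 2 * x - omega mu ^+ 2).

Definition positive_root (R : rcfType) (n : nat) (omega k : 'I_n -> R)
  (sigma : 'I_n -> bool) (x : R) : Prop :=
  0 < x /\ (forall mu, 0 <= k mu ^+ 2 * x - omega mu ^+ 2) /\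
  f_sigma omega k sigma x = 0.

(* Main.v *)
Require Import Defs.
From mathcomp Require Import all_boot all_order all_algebra.
Import Order.TTheory GRing.Theory Num.Theory.
Local Open Scope ring_scope.

Theorem proposition1 (R : rcfType) (n : nat) (hn : (2 <= n)%N)
  (omega k : 'I_n -> R) (sigma : 'I_n -> bool)
  (hk : forall mu, 0 < k mu)
  (IC1 : \sum_(mu < n) omega mu = 0)
  (IC2 : exists mu, omega mu != 0)
  (IC3 : forall i j : 'I_n, (i <= j)%N -> `|omega i / k i| <= `|omega j / k j|)
  (x : R) (hx : positive_root omega k sigma x) :
  (forall last : 'I_n, val last = n.-1 -> (omega last / k last) ^+ 2 <= x) /\
  x <= (n%:R^-1 * \sum_(mu < n | sigma mu) k mu) ^+ 2.
Proof.
case: hx => [xpos [hr hf]].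
split.
  move=> l _.
  have hkl := hk l.
  have := hr l; rewrite subr_ge0 => h.
  rewrite expr_div_n ler_pdivrMr ?exprn_gt0 // mulrC //.
set s := Num.sqrt x.
have s0 : 0 < s by rewrite sqrtr_gt0.
have xs : x = s ^+ 2 by rewrite sqr_sqrtr // ltW.
have hx : x = n%:R^-1 * \sum_(mu < n) sgn R (sigma mu) * Num.sqrt (k mu ^+ 2 * x - omega mu ^+ 2).
  by move: hf; rewrite /f_sigma addrC => /eqP; rewrite subr_eq0 => /eqP ->.
have n0 : 0 < n%:R^-1 :> R by rewrite invr_gt0 ltr0n; apply: leq_trans hn.
have hle : x <= n%:R^-1 * \sum_(mu < n | sigma mu) (k mu * s).
  rewrite {1}hx ler_pM2l // [X in _ <= X]big_mkcond /=.
  apply: ler_sum => i _.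
  case: (sigma i); rewrite /sgn.
    rewrite mul1r.
    have -> : k i * s = Num.sqrt (k i ^+ 2 * x).
      by rewrite sqrtrM ?sqr_ge0 // sqrtr_sqr ger0_norm // ltW.
    rewrite ler_sqrt; last by rewrite mulr_ge0 ?sqr_ge0 // ltW.
    by rewrite lerBlDr lerDl sqr_ge0.
  by rewrite mulN1r oppr_le0 sqrtr_ge0.
set S := n%:R^-1 * \sum_(mu < n | sigma mu) k mu.
have hsS : s <= S.
  have : s ^+ 2 <= s * S.
    have e : n%:R^-1 * \sum_(mu < n | sigma mu) (k mu * s) = s * S.
      by rewrite /S -big_distrl /= mulrA mulrC.
    by rewrite -xs -e.
  by rewrite expr2 ler_pM2l.
rewrite xs ler_sqr // ?nnegrE ltW //.
exact: lt_le_trans s0 hsS.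
Qed.
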